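(* Let $b\in\Gamma^{*,\infty}_{A_p,\rho}(\mathbb R^{2d})$ be hypoelliptic, with hypoellipticity conditions (i) and (ii) holding with a constant $B$. Then for every $h>0$ there exists $C>0$ (resp. there exist $h,C>0$) such that $$|D^\alpha_w(b(w))^n|\le C2^nh^{|\alpha|}A_\alpha\langle w\rangle^{-\rho|\alpha|}|b(w)|^n$$ for all $\alpha\in\mathbb N^{2d}$, $n\in\mathbb N$, $w\in Q^c_B$. If the hypoellipticity conditions hold on all of $\mathbb R^{2d}$ (i.e. $B=0$), the estimate holds for all $w\in\mathbb R^{2d}$.
   Context: Notation: $\mathbb N=\{0,1,\dots\}$, $\langle x\rangle=(1+|x|^2)^{1/2}$, $D^\alpha=i^{-|\alpha|}\partial^\alpha$, $w=(x,\xi)\in\mathbb R^{2d}$. Sequences $M_p,A_p$ positive with $M_0=M_1=A_0=A_1=1$; (M.1) $N_p^2\le N_{p-1}N_{p+1}$; (M.2) $N_p\le c_0H^p\min_{q\le p}N_{p-q}N_q$; (M.3) $\sum_{p>q}N_{p-1}/N_p\le c_0qN_q/N_{q+1}$; (M.3)' $\sum N_{p-1}/N_p<\infty$; (M.4) $N_p^2/p!^2\le(N_{p-1}/(p-1)!)(N_{p+1}/(p+1)!)$. Standing: $M_p$ satisfies (M.1),(M.2),(M.3); $A_p$ satisfies (M.1),(M.2),(M.3)',(M.4); $A_p\le cL^pM_p$; $\rho$ with $\rho_0\le\rho\le1$ (strict if inf not attained), $\rho_0=\inf\{r>0:\exists c,L,\ A_p\le cL^pM_p^r\}$. $A_\alpha=A_{|\alpha|}$,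 $M(\lambda)=\sup_p\ln_+(\lambda^p/M_p)$. $*$: Beurling $(M_p)$ or Roumieu $\{M_p\}$; ''(resp. ...)'' refers to Roumieu. $\Gamma^{(M_p),\infty}_{A_p,\rho}(\mathbb R^{2d})=\varinjlim_{m\to\infty}\varprojlim_{h\to0}$, $\Gamma^{\{M_p\},\infty}_{A_p,\rho}(\mathbb R^{2d})=\varinjlim_{h\to\infty}\varprojlim_{m\to0}$ of Banach spaces of $a\in C^\infty(\mathbb R^{2d})$ with finite $\sup|D^\alpha_\xi D^\beta_xa|\langle w\rangle^{\rho(|\alpha|+|\beta|)}e^{-M(m|\xi|)-M(m|x|)}/(h^{|\alpha|+|\beta|}A_\alpha A_\beta)$. $Q_t=\{(x,\xi):\langle x\rangle<t,\langle\xi\rangle<t\}$. Hypoellipticity with constant $B$: (i) there are $c,m>0$ (resp. for every $m>0$ there is $c>0$) with $|b(x,\xi)|\ge ce^{-M(m|x|)-M(m|\xi|)}$ on $Q^c_B$; (ii) for every $h>0$ there is $C$ (resp. there are $h,C$) with $|D^\alpha_\xi D^\beta_xb|\le Ch^{|\alpha|+|\beta|}|b|A_\alpha A_\beta\langle w\rangle^{-\rho(|\alpha|+|\beta|)}$ on $Q^c_B$. *)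

(* Defs.v *)
From HB Require Import structures.
From mathcomp Require Import all_boot all_order all_algebra.
From mathcomp Require Import all_classical all_reals all_analysis.
From mathcomp Require Import complex.
Import Order.TTheory GRing.Theory Num.Theory.
Import numFieldNormedType.Exports.

Set Implicit Arguments.
Unset Strict Implicit.
Unset Printing Implicit Defensive.

Local Open Scope ring_scope.
Local Open Scope classical_set_scope.

Inductive ultra_kind := Beurling | Roumieu.

Definition cabs (R : realType) (z : R[i]) : R := ComplexField.Normc.normc z.

Definition iC (R : realType) : R[i] := Complex 0 1.

Definition eucl (R : realType) n (x : 'rV[R]_n) : R :=
  Num.sqrt (\sum_(j < n) x 0 j ^+ 2).
Definition jap (R : realType) n (x : 'rV[R]_n) : R :=
  Num.sqrt (1 + \sum_(j < n) x 0 j ^+ 2).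

Definition ev (R : realType) n (j : 'I_n) : 'rV[R]_n := delta_mx 0 j.

Definition pd (R : realType) n (j : 'I_n) (f : 'rV[R]_n -> R[i]) :
    'rV[R]_n -> R[i] :=
  fun x => Complex ('D_(ev R j) (fun y => complex.Re (f y)) x)
                   ('D_(ev R j) (fun y => complex.Im (f y)) x).

Definition mlen n (g : 'I_n -> nat) : nat := (\sum_(j < n) g j)%N.

(** d^g f : first derivatives in x_0 (g 0 times), then x_1, ... *)
Definition pdm (R : realType) n (g : 'I_n -> nat) (f : 'rV[R]_n -> R[i]) :
    'rV[R]_n -> R[i] :=
  foldr (fun j h => iter (g j) (pd j) h) f (rev (enum 'I_n)).

Definition Dop (R : realType) n (g : 'I_n -> nat) (f : 'rV[R]_n -> R[i]) :
    'rV[R]_n -> R[i] :=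
  fun x => (iC R ^- mlen g) * pdm g f x.

Definition smooth (R : realType) n (f : 'rV[R]_n -> R[i]) : Prop :=
  forall js : seq 'I_n,
    let g := foldr (@pd R n) f js in
    [/\ continuous (fun y => complex.Re (g y)),
        continuous (fun y => complex.Im (g y)) &
        forall (j : 'I_n) (x : 'rV[R]_n),
          derivable (fun y => complex.Re (g y)) x (ev R j) /\
          derivable (fun y => complex.Im (g y)) x (ev R j)].

Definition xpart (R : realType) d (w : 'rV[R]_(d + d)) : 'rV[R]_d := lsubmx w.
Definition xipart (R : realType) d (w : 'rV[R]_(d + d)) : 'rV[R]_d := rsubmx w.
Definition gx d (g : 'I_(d + d) -> nat) : 'I_d -> nat := fun i => g (lshift d i).
Definition gxi d (g : 'I_(d + d) -> nat) : 'I_d -> nat := fun i => g (rshift d i).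

Definition Qt (R : realType) d (t : R) (w : 'rV[R]_(d + d)) : Prop :=
  jap (xpart w) < t /\ jap (xipart w) < t.

Definition seq_pos (R : realType) (N : nat -> R) : Prop :=
  (forall p, 0 < N p) /\ N 0%N = 1 /\ N 1%N = 1.
Definition cond_M1 (R : realType) (N : nat -> R) : Prop :=
  forall p : nat, (1 <= p)%N -> N p ^+ 2 <= N p.-1 * N p.+1.
Definition cond_M2 (R : realType) (N : nat -> R) : Prop :=
  exists c0 H : R, forall p q : nat, (q <= p)%N ->
    N p <= c0 * H ^+ p * (N (p - q)%N * N q).
Definition cond_M3 (R : realType) (N : nat -> R) : Prop :=
  exists c0 : R, forall q : nat, (1 <= q)%N -> forall n : nat,
    \sum_(q.+1 <= p < n) N p.-1 / N p <= c0 * q%:R * N q / N q.+1.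
Definition cond_M3' (R : realType) (N : nat -> R) : Prop :=
  cvg (series (fun p : nat => N p / N p.+1) @ \oo).
Definition cond_M4 (R : realType) (N : nat -> R) : Prop :=
  forall p : nat, (1 <= p)%N ->
    (N p / (p`!)%:R) ^+ 2 <= (N p.-1 / (p.-1`!)%:R) * (N p.+1 / (p.+1`!)%:R).

Definition rho_set (R : realType) (M A : nat -> R) : set R :=
  [set r | 0 < r /\ exists c L : R, forall p : nat, A p <= c * L ^+ p * M p `^ r].
Definition rho0 (R : realType) (M A : nat -> R) : R := inf (rho_set M A).

Definition standing (R : realType) (M A : nat -> R) (rho : R) : Prop :=
  [/\ seq_pos M /\ seq_pos A,
      [/\ cond_M1 M, cond_M2 M & cond_M3 M],
      [/\ cond_M1 A, cond_M2 A, cond_M3' A & cond_M4 A],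
      (exists c L : R, forall p : nat, A p <= c * L ^+ p * M p) &
      [/\ rho0 M A <= rho, rho <= 1 & (~ rho_set M A (rho0 M A) -> rho0 M A < rho)]].

Definition lnp (R : realType) (t : R) : R := Num.max 0 (ln t).
Definition assocM (R : realType) (M : nat -> R) (lam : R) : R :=
  sup (range (fun p : nat => lnp (lam ^+ p / M p))).

(** finiteness of the defining seminorm of the Banach space with parameters m, h *)
Definition gamma_seminorm_finite (R : realType) d (M A : nat -> R) (rho m h : R)
    (a : 'rV[R]_(d + d) -> R[i]) : Prop :=
  exists C : R, forall (g : 'I_(d + d) -> nat) (w : 'rV[R]_(d + d)),
    cabs (Dop g a w) * jap w `^ (rho * (mlen g)%:R)
      * expR (- assocM M (m * eucl (xipart w)) - assocM M (m * eucl (xpart w)))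
      / (h ^+ mlen g * A (mlen (gxi g)) * A (mlen (gx g))) <= C.

Definition Gamma (R : realType) (k : ultra_kind) d (M A : nat -> R) (rho : R)
    (a : 'rV[R]_(d + d) -> R[i]) : Prop :=
  smooth a /\
  match k with
  | Beurling => exists m : R, 0 < m /\ forall h : R, 0 < h ->
                  gamma_seminorm_finite M A rho m h a
  | Roumieu => exists h : R, 0 < h /\ forall m : R, 0 < m ->
                  gamma_seminorm_finite M A rho m h a
  end.

Definition hypo_i (R : realType) (k : ultra_kind) d (M : nat -> R) (B : R)
    (b : 'rV[R]_(d + d) -> R[i]) : Prop :=
  let P c m := forall w, ~ Qt B w ->
     c * expR (- assocM M (m * eucl (xpart w)) - assocM M (m * eucl (xipart w)))
       <= cabs (b w) in
  match k with
  | Beurling => exists c m : R, [/\ 0 < c, 0 < m & P c m]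
  | Roumieu => forall m : R, 0 < m -> exists c : R, 0 < c /\ P c m
  end.

Definition hypo_ii (R : realType) (k : ultra_kind) d (A : nat -> R) (rho B : R)
    (b : 'rV[R]_(d + d) -> R[i]) : Prop :=
  let P h C := forall (g : 'I_(d + d) -> nat) w, ~ Qt B w ->
     cabs (Dop g b w) <= C * h ^+ mlen g * cabs (b w)
        * A (mlen (gxi g)) * A (mlen (gx g)) * jap w `^ (- (rho * (mlen g)%:R))
  in
  match k with
  | Beurling => forall h : R, 0 < h -> exists C : R, P h C
  | Roumieu => exists h C : R, 0 < h /\ P h C
  end.

Definition power_estimate (R : realType) d (A : nat -> R) (rho B h C : R)
    (b : 'rV[R]_(d + d) -> R[i]) : Prop :=
  forall (g : 'I_(d + d) -> nat) (n : nat) (w : 'rV[R]_(d + d)), ~ Qt B w ->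
    cabs (Dop g (fun v => b v ^+ n) w)
      <= C * 2 ^+ n * h ^+ mlen g * A (mlen g) * jap w `^ (- (rho * (mlen g)%:R))
         * cabs (b w) ^+ n.

(* Main.v *)
Require Import Defs.
From HB Require Import structures.
From mathcomp Require Import all_boot all_order all_algebra.
From mathcomp Require Import all_classical all_reals all_analysis.
From mathcomp Require Import complex.
Import Order.TTheory GRing.Theory Num.Theory.
Import numFieldNormedType.Exports.
Local Open Scope ring_scope.
From mathcomp Require Import ring lra.

Section Gen.
Variable R : realType.
Variable V : normedModType R.
Implicit Types f g : V -> R.
Lemma dvM f g x v : derivable f x v -> derivable g x v -> derivable (fun y => f y * g y) x v.
Proof. exact: derivableM. Qed.
Lemma dvD f g x v : derivable f x v -> derivable g x v -> derivable (fun y => f y + g y) x v.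
Proof. exact: derivableD. Qed.
Lemma dvB f g x v : derivable f x v -> derivable g x v -> derivable (fun y => f y - g y) x v.
Proof. exact: derivableB. Qed.
Lemma drM f g x v : derivable f x v -> derivable g x v ->
  'D_v (fun y => f y * g y) x = f x * 'D_v g x + g x * 'D_v f x.
Proof. exact: deriveM. Qed.
Lemma drD f g x v : derivable f x v -> derivable g x v ->
  'D_v (fun y => f y + g y) x = 'D_v f x + 'D_v g x.
Proof. exact: deriveD. Qed.
Lemma drB f g x v : derivable f x v -> derivable g x v ->
  'D_v (fun y => f y - g y) x = 'D_v f x - 'D_v g x.
Proof. exact: deriveB. Qed.
Lemma drC (c : R) x v : 'D_v (fun _ : V => c) x = 0.
Proof. exact: derive_cst. Qed.
Lemma dvC (c : R) x v : derivable (fun _ : V => c) x v.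
Proof. exact: derivable_cst. Qed.
End Gen.
Arguments dvM {R V f g x v}. Arguments dvD {R V f g x v}. Arguments dvB {R V f g x v}.
Arguments drM {R V f g x v}. Arguments drD {R V f g x v}. Arguments drB {R V f g x v}.
Section Calc.
Variable R : realType.
Variable n : nat.
Implicit Types f g : 'rV[R]_n -> R[i].

Definition Dj (j : 'I_n) f := forall x,
  derivable (fun y => complex.Re (f y)) x (ev R j) /\
  derivable (fun y => complex.Im (f y)) x (ev R j).

Definition DS f := forall (js : seq 'I_n) j, Dj j (foldr (@pd R n) f js).

Lemma ReM (x y : R[i]) : complex.Re (x * y) = complex.Re x * complex.Re y - complex.Im x * complex.Im y.
Proof. by case: x => a b; case: y => c d. Qed.
Lemma ImM (x y : R[i]) : complex.Im (x * y) = complex.Re x * complex.Im y + complex.Im x * complex.Re y.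
Proof. by case: x => a b; case: y => c d. Qed.
Lemma ReD (x y : R[i]) : complex.Re (x + y) = complex.Re x + complex.Re y.
Proof. by case: x => a b; case: y => c d. Qed.
Lemma ImD (x y : R[i]) : complex.Im (x + y) = complex.Im x + complex.Im y.
Proof. by case: x => a b; case: y => c d. Qed.

Lemma Dj_add j f g : Dj j f -> Dj j g -> Dj j (fun v => f v + g v).
Proof.
move=> hf hg x; case: (hf x) => f1 f2; case: (hg x) => g1 g2.
split.
- under eq_fun do rewrite ReD. exact: dvD.
- under eq_fun do rewrite ImD. exact: dvD.
Qed.
Lemma Dj_mul j f g : Dj j f -> Dj j g -> Dj j (fun v => f v * g v).
Proof.
move=> hf hg x; case: (hf x) => f1 f2; case: (hg x) => g1 g2.
split.
- under eq_fun do rewrite ReM. by apply: dvB; apply: dvM.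
- under eq_fun do rewrite ImM. by apply: dvD; apply: dvM.
Qed.

Lemma Dj_cst j (c : R[i]) : Dj j (fun _ => c).
Proof. by move=> x; split; apply: dvC. Qed.

Lemma FReD f g : (fun y => complex.Re (f y + g y)) = (fun y => complex.Re (f y) + complex.Re (g y)).
Proof. by apply/funext => y; rewrite ReD. Qed.
Lemma FImD f g : (fun y => complex.Im (f y + g y)) = (fun y => complex.Im (f y) + complex.Im (g y)).
Proof. by apply/funext => y; rewrite ImD. Qed.
Lemma FReM f g : (fun y => complex.Re (f y * g y)) = (fun y => complex.Re (f y) * complex.Re (g y) - complex.Im (f y) * complex.Im (g y)).
Proof. by apply/funext => y; rewrite ReM. Qed.
Lemma FImM f g : (fun y => complex.Im (f y * g y)) = (fun y => complex.Re (f y) * complex.Im (g y) + complex.Im (f y) * complex.Re (g y)).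
Proof. by apply/funext => y; rewrite ImM. Qed.

Lemma pd_add j f g : Dj j f -> Dj j g ->
  pd j (fun v => f v + g v) = fun v => pd j f v + pd j g v.
Proof.
move=> hf hg; apply/funext => x; case: (hf x) => f1 f2; case: (hg x) => g1 g2.
rewrite /pd (FReD f g) (FImD f g).
by rewrite (drD f1 g1) (drD f2 g2).
Qed.

Lemma pd_mul j f g : Dj j f -> Dj j g ->
  pd j (fun v => f v * g v) = fun v => pd j f v * g v + f v * pd j g v.
Proof.
move=> hf hg; apply/funext => x; case: (hf x) => f1 f2; case: (hg x) => g1 g2.
rewrite /pd (FReM f g) (FImM f g).
rewrite (drB (dvM f1 g1) (dvM f2 g2)) (drD (dvM f1 g2) (dvM f2 g1)).
rewrite (drM f1 g1) (drM f2 g2) (drM f1 g2) (drM f2 g1).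
case: (f x) => a b; case: (g x) => c e /=.
apply/eqP; rewrite eq_complex /=; apply/andP; split; apply/eqP; ring.
Qed.

Lemma pd_cst (j : 'I_n) (c0 : R[i]) : pd j (fun _ => c0) = fun _ => 0.
Proof. by apply/funext => x; rewrite /pd !drC. Qed.
Lemma Dj_sum (I : Type) (l : seq I) (F : I -> 'rV[R]_n -> R[i]) (j : 'I_n) :
  (forall i, Dj j (F i)) -> Dj j (fun v => \sum_(i <- l) F i v).
Proof.
move=> hF; elim: l => [|a l IH].
  under eq_fun do rewrite big_nil. exact: Dj_cst.
under eq_fun do rewrite big_cons. exact: Dj_add.
Qed.

Lemma pd_sum (I : Type) (l : seq I) (F : I -> 'rV[R]_n -> R[i]) (j : 'I_n) :
  (forall i, Dj j (F i)) ->
  pd j (fun v => \sum_(i <- l) F i v) = fun v => \sum_(i <- l) pd j (F i) v.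
Proof.
move=> hF; elim: l => [|a l IH].
  under eq_fun do rewrite big_nil. rewrite pd_cst.
  by apply/funext => v; rewrite big_nil.
under eq_fun do rewrite big_cons.
rewrite pd_add //; last exact: Dj_sum.
by rewrite IH; apply/funext => v; rewrite big_cons.
Qed.

Fixpoint masks (m : nat) : seq bitseq :=
  if m is m'.+1 then [seq true :: mk | mk <- masks m'] ++ [seq false :: mk | mk <- masks m']
  else [:: [::]].

Lemma leib f g : DS f -> DS g -> forall js : seq 'I_n,
  foldr (@pd R n) (fun v => f v * g v) js = fun v =>
   \sum_(mk <- masks (size js)) foldr (@pd R n) f (mask mk js) v * foldr (@pd R n) g (mask (map negb mk) js) v.
Proof.
move=> hf hg; elim => [|j js IH].
  by apply/funext => v; rewrite /= big_seq1.
rewrite /= IH pd_sum; last by move=> mk; apply: Dj_mul.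
apply/funext => v; rewrite big_cat !big_map /=.
rewrite -big_split /=; apply: eq_bigr => mk _.
by rewrite pd_mul //.
Qed.

Lemma DS_mul f g : DS f -> DS g -> DS (fun v => f v * g v).
Proof.
move=> hf hg js j; rewrite leib //.
apply: Dj_sum => mk; exact: Dj_mul.
Qed.

Lemma foldr_pd_cst (c : R[i]) js : foldr (@pd R n) (fun _ => c) js = fun _ => if js is [::] then c else 0.
Proof.
elim: js => [|j js IH] //=; rewrite IH; case: js {IH} => [|? ?]; exact: pd_cst.
Qed.

Lemma DS_cst (c : R[i]) : DS (fun _ => c).
Proof. by move=> js j; rewrite foldr_pd_cst; exact: Dj_cst. Qed.

Lemma DS_exp f : DS f -> forall k, DS (fun v => f v ^+ k).
Proof.
move=> hf; elim => [|k IH].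
  under eq_fun do rewrite expr0. exact: DS_cst.
under eq_fun do rewrite exprS. exact: DS_mul.
Qed.
End Calc.

Section Seqs.
Variable n : nat.

Definition ge_ord : rel 'I_n := fun x y => (y <= x)%N.
Definition cseq (g : 'I_n -> nat) : seq 'I_n := flatten [seq nseq (g j) j | j <- rev (enum 'I_n)].
Definition cnt (s : seq 'I_n) : 'I_n -> nat := fun j => count_mem j s.

Lemma ge_ord_trans : transitive ge_ord.
Proof. by move=> x y z; rewrite /ge_ord => h1 h2; apply: leq_trans h2 h1. Qed.
Lemma ge_ord_anti : antisymmetric ge_ord.
Proof. by move=> x y; rewrite /ge_ord => /andP[h1 h2]; apply: val_inj; apply/eqP; rewrite eqn_leq h1 h2. Qed.

Lemma pdm_cseq (R : realType) g (f : 'rV[R]_n -> R[i]) : pdm g f = foldr (@pd R n) f (cseq g).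
Proof.
rewrite /pdm /cseq; elim: (rev (enum 'I_n)) => //= j l IH.
rewrite foldr_cat IH; elim: (g j) => //= k ->; by [].
Qed.

Lemma sum_rev_enum (F : 'I_n -> nat) : sumn [seq F j | j <- rev (enum 'I_n)] = (\sum_(j < n) F j)%N.
Proof. by rewrite sumnE big_map big_rev big_enum. Qed.

Lemma count_cseq g x : count_mem x (cseq g) = g x.
Proof.
rewrite /cseq count_flatten -map_comp.
rewrite (eq_map (g := fun j => ((j == x) * g j)%N)); last by move=> j /=; rewrite count_nseq.
rewrite sum_rev_enum (bigD1 x) //= eqxx mul1n big1 ?addn0 // => j /negbTE ->; by rewrite mul0n.
Qed.

Lemma size_cseq g : size (cseq g) = mlen g.
Proof.
rewrite /cseq size_flatten /shape -map_comp.
rewrite (eq_map (g := g)); last by move=> j /=; rewrite size_nseq.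
by rewrite sum_rev_enum.
Qed.

Lemma mem_cseq g x : x \in cseq g -> (0 < g x)%N.
Proof. by rewrite -has_pred1 has_count count_cseq. Qed.

Lemma sorted_flat (g : 'I_n -> nat) (l : seq 'I_n) : sorted ge_ord l ->
  sorted ge_ord (flatten [seq nseq (g j) j | j <- l]).
Proof.
rewrite !(sorted_pairwise ge_ord_trans).
elim: l => [|j l IH] //= /andP[hj hl].
rewrite pairwise_cat IH // andbT; apply/andP; split.
  apply/allrelP => x y /nseqP[-> _] /flattenP[s /mapP[k kl ->]] /nseqP[-> _].
  by move/allP: hj => /(_ k kl).
elim: (g j) => //= k ->; rewrite andbT; apply/allP => x /nseqP[-> _]; exact: leqnn.
Qed.

Lemma sorted_cseq g : sorted ge_ord (cseq g).
Proof.
apply: sorted_flat.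
rewrite -(rev_sorted (fun x y => ge_ord y x)).
have h := iota_ltn_sorted 0 n; rewrite -val_enum_ord sorted_map in h.
by rewrite revK; move: h; apply: sub_sorted => x y /= /ltnW.
Qed.

Lemma sorted_cseq_eq s : sorted ge_ord s -> s = cseq (cnt s).
Proof.
move=> hs; apply: (sorted_eq ge_ord_trans ge_ord_anti hs (sorted_cseq _)).
by rewrite /perm_eq; apply/allP => x _ /=; rewrite count_cseq.
Qed.

Lemma mlen_cnt s : sorted ge_ord s -> mlen (cnt s) = size s.
Proof. by move=> hs; rewrite [in RHS](@sorted_cseq_eq s hs) size_cseq. Qed.

End Seqs.
Section LC.
Variable R : realType.
Variable x : nat -> R.
Hypothesis xpos : forall p, 0 < x p.
Hypothesis lc : forall p, (1 <= p)%N -> x p ^+ 2 <= x p.-1 * x p.+1.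

Lemma lc1 i k : x i.+1 * x (i + k)%N <= x (i + k).+1 * x i.
Proof.
elim: k => [|k IH]; first by rewrite addn0 mulrC.
have h := lc (i + k).+1 isT; rewrite /= -addnS in h.
rewrite -addnS in IH *.
have hb := xpos (i + k)%N.
have ha := xpos i.+1; have hc := xpos (i + k.+1)%N; have hd := xpos (i + k.+1).+1; have he := xpos i.
rewrite addnS in h hc hd *. rewrite addnS in IH.
nra.
Qed.
Lemma aux6 {A Bq P' Cq P D : R} : 0 < A -> 0 < Bq -> 0 < P ->
  Bq * P' <= Cq * P -> A * Cq <= D * Bq -> A * P' <= D * P.
Proof.
move=> hA hB hP h1 h2.
have e1 := ler_wpM2l (ltW hA) h1; have e2 := ler_wpM2r (ltW hP) h2.
rewrite -(ler_pM2r hB); nra.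
Qed.

Lemma lc2 p p' q : (p <= p')%N -> x (p + q)%N * x p' <= x (p' + q)%N * x p.
Proof.
move=> hp; elim: q => [|q IH]; first by rewrite !addn0 mulrC.
have h := lc1 (p + q) (p' - p).
have e : (p + q + (p' - p) = p' + q)%N by rewrite addnAC subnKC.
rewrite e in h; rewrite !addnS.
by apply: (aux6 _ _ _ IH h).
Qed.

Lemma lc_ratio_mono i i' : (i <= i')%N -> x i.+1 * x i' <= x i'.+1 * x i.
Proof. by move=> h; have := lc1 i (i' - i); rewrite subnKC. Qed.

Hypothesis x0 : x 0%N = 1.

Lemma lc_super p q : x p * x q <= x (p + q)%N.
Proof. by have := lc2 0 p q (leq0n p); rewrite add0n x0 mulr1 addnC mulrC. Qed.

Hypothesis x1 : x 1%N = 1.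

Lemma lc_key j m l : (1 <= j)%N -> (j <= m)%N -> (l <= m - j)%N ->
  x j * x (m - j)%N * x l.+1 <= x m * x l.
Proof.
move=> h1 h2 h3.
have i1 := lc2 1 (m - j + 1) (j - 1) (leq_addl (m - j) 1).
have e1 : (1 + (j - 1) = j)%N by rewrite addnC subnK.
have e2 : (m - j + 1 + (j - 1) = m)%N by rewrite -addnA subnKC // subnK.
rewrite e1 e2 x1 mulr1 in i1.
have i2 := lc2 l (m - j) 1 h3; rewrite !addn1 in i2.
have p1 := xpos j; have p2 := xpos (m - j)%N; have p3 := xpos l.+1; have p4 := xpos m;
have p5 := xpos l; have p6 := xpos (m - j).+1.
rewrite addn1 in i1.
have e3 := ler_wpM2r (ltW (mulr_gt0 p3 p2)) i1.
have e4 := ler_wpM2l (ltW p4) i2.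
rewrite -(ler_pM2r p6).
have -> : x j * x (m-j)%N * x l.+1 * x (m-j).+1 = x j * x (m-j).+1 * (x l.+1 * x (m-j)%N) by ring.
have -> : x m * x l * x (m-j).+1 = x m * (x (m-j).+1 * x l) by ring.
exact: le_trans e3 e4.
Qed.
End LC.
Section Comb.
Variable R : realType.

Fixpoint cc (l m : nat) : R :=
  if l is l'.+1 then \sum_(i < m) cc l' i else (m == 0%N)%:R.

Lemma cc_ge0 l m : 0 <= cc l m.
Proof. elim: l m => [|l IH] m /=; [exact: ler0n | exact: sumr_ge0]. Qed.

Lemma cc_supp l m : cc l m != 0 -> (l <= m)%N.
Proof.
elim: l m => [|l IH] m //=.
case: (pselect (exists i : 'I_m, cc l i != 0)) => [[i /IH hi] _|hn].
  exact: leq_ltn_trans hi (ltn_ord i).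
rewrite big1 ?eqxx // => i _; apply/eqP; apply: contra_notT hn => hi.
by exists i.
Qed.

Lemma sum_pow2 m : \sum_(i < m) (2 : R) ^+ i <= 2 ^+ m.
Proof.
elim: m => [|m IH]; first by rewrite big_ord0.
rewrite big_ord_recr /= exprS.
have : 0 <= 2 ^+ m :> R by apply: exprn_ge0.
lra.
Qed.

Lemma cc_le l m : cc l m <= 2 ^+ m.
Proof.
elim: l m => [|l IH] m /=.
  case: m => [|m]; first by rewrite expr0.
  by rewrite /= exprn_ge0.
apply: le_trans (sum_pow2 m); apply: ler_sum => i _; exact: IH.
Qed.
Variable a : nat -> R.
Hypothesis apos : forall p, 0 < a p.
Hypothesis alc : forall p, (1 <= p)%N -> a p ^+ 2 <= a p.-1 * a p.+1.
Hypothesis a0 : a 0%N = 1.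
Hypothesis a1 : a 1%N = 1.
Variable Cp : R.
Hypothesis Cp1 : 1 <= Cp.

Definition V (k m : nat) : R :=
  \sum_(l < k.+1) 'C(k, l)%:R * (Cp ^+ l / a l) * cc l m.

Lemma V_ge0 k m : 0 <= V k m.
Proof.
apply: sumr_ge0 => l _; apply: mulr_ge0; last exact: cc_ge0.
apply: mulr_ge0; first exact: ler0n.
apply: divr_ge0; last exact: ltW.
by apply: exprn_ge0; apply: le_trans Cp1.
Qed.

Lemma V0 m : V 0 m = (m == 0%N)%:R.
Proof. by rewrite /V big_ord1 /= bin0 expr0 a0 divr1 !mul1r. Qed.

Lemma pascal_sum (X : nat -> R) k :
  \sum_(l < k.+2) 'C(k.+1, l)%:R * X l =
  \sum_(l < k.+1) 'C(k, l)%:R * X l + \sum_(l < k.+1) 'C(k, l)%:R * X l.+1.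
Proof.
rewrite big_ord_recl [in X in _ = X + _]big_ord_recl.
have -> : \sum_(i < k.+1) 'C(k.+1, bump 0 i)%:R * X (bump 0 i)
   = \sum_(i < k.+1) 'C(k, i.+1)%:R * X i.+1 + \sum_(i < k.+1) 'C(k, i)%:R * X i.+1.
  rewrite -big_split /=; apply: eq_bigr => i _.
  by rewrite /bump /= add1n binS natrD mulrDl.
rewrite big_ord_recr /= (bin_small (ltnSn k)) mulr0n mul0r addr0 !bin0 addrA.
congr (_ + _ + _); apply: eq_bigr => i _; by rewrite /bump /= add1n.
Qed.

Lemma Vrec k m : V k.+1 m = V k m +
  \sum_(l < k.+1) 'C(k, l)%:R * (Cp ^+ l.+1 / a l.+1 * cc l.+1 m).
Proof.
rewrite /V.
under eq_bigr do rewrite -mulrA.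
under [in X in _ = X + _]eq_bigr do rewrite -mulrA.
exact: (pascal_sum (fun l => Cp ^+ l / a l * cc l m)).
Qed.
Lemma tw k m l (i : nat) : (i < m)%N ->
  Cp * (a i.+1 * a (m - i.+1)%N) * ('C(k, l)%:R * (Cp ^+ l / a l) * cc l (m - i.+1)%N)
  <= a m * ('C(k, l)%:R * (Cp ^+ l.+1 / a l.+1 * cc l (m - i.+1)%N)).
Proof.
move=> im.
set c := cc l (m - i.+1)%N.
have [c0|cn0] := eqVneq c 0; first by rewrite c0 !(mulr0, mul0r).
have hl : (l <= m - i.+1)%N by apply: cc_supp.
have key := @lc_key R a apos alc a1 i.+1 m l (ltn0Sn i) im hl.
have ap := apos; have c0 : 0 <= c by apply: cc_ge0.
have K0 : 0 <= 'C(k, l)%:R * Cp ^+ l.+1 * c.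
  by apply: mulr_ge0 => //; apply: mulr_ge0; [exact: ler0n | apply: exprn_ge0; apply: le_trans Cp1].
have -> : Cp * (a i.+1 * a (m - i.+1)%N) * ('C(k, l)%:R * (Cp ^+ l / a l) * c) =
  ('C(k, l)%:R * Cp ^+ l.+1 * c) * (a i.+1 * a (m - i.+1)%N / a l) by rewrite exprS; ring.
have -> : a m * ('C(k, l)%:R * (Cp ^+ l.+1 / a l.+1 * c)) =
  ('C(k, l)%:R * Cp ^+ l.+1 * c) * (a m / a l.+1) by ring.
apply: (ler_wpM2l K0).
rewrite ler_pdivrMr // mulrAC ler_pdivlMr //.
Qed.
Lemma core k m :
  \sum_(j < m.+1) (if j == 0%N :> nat then 1 else Cp) * (a j * a (m - j)%N) * V k (m - j)%N
  <= a m * V k.+1 m.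
Proof.
rewrite big_ord_recl /= subn0 a0 mul1r mul1r Vrec mulrDr lerD2l.
under eq_bigr do rewrite /bump /= add1n.
rewrite /V.
under eq_bigr do rewrite mulr_sumr.
rewrite exchange_big /= mulr_sumr.
apply: ler_sum => l _.
rewrite !mulr_sumr.
rewrite [in X in _ <= X](reindex_inj rev_ord_inj) /=.
apply: ler_sum => i _.
exact: tw.
Qed.

Lemma V_bound (Kc : R) : (forall l, Cp ^+ l / a l <= Kc) ->
  forall k m, V k m <= Kc * 2 ^+ m * 2 ^+ k.
Proof.
move=> hK k m; rewrite /V.
have e : \sum_(l < k.+1) ('C(k, l))%:R = (2 : R) ^+ k.
  have := expnDn 1 1 k; rewrite addn1 => h.
  rewrite -natr_sum -natrX h; congr (_ %:R); apply: eq_bigr => i _.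
  by rewrite !exp1n !muln1.
rewrite -e mulr_sumr; apply: ler_sum => l _.
rewrite -[X in X <= _]mulrA [in X in _ <= X]mulrC; apply: ler_wpM2l; first exact: ler0n.
apply: ler_pM.
- apply: divr_ge0; [apply: exprn_ge0; exact: le_trans ler01 Cp1 | exact: ltW].
- exact: cc_ge0.
- exact: hK.
- exact: cc_le.
Qed.
End Comb.
Section Kex.
Variable R : realType.
Variable A : nat -> R.
Hypothesis Apos : forall p, 0 < A p.
Hypothesis hM3 : cond_M3' A.
Let a p := A p / (p`!)%:R.
Hypothesis alc : forall p, (1 <= p)%N -> a p ^+ 2 <= a p.-1 * a p.+1.
Variable Cp : R.
Hypothesis Cp1 : 1 <= Cp.

Lemma apos p : 0 < a p.
Proof. by rewrite /a divr_gt0 // ltr0n fact_gt0. Qed.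

Lemma harm_le n : a n.+1 < Cp * a n -> (n.+1%:R)^-1 <= Cp * (A n / A n.+1).
Proof.
move=> h.
have F0 : (0 < (n`!)%:R :> R) by rewrite ltr0n fact_gt0.
have N0 : (0 < (n.+1)%:R :> R) by rewrite ltr0n.
have A0 := Apos n; have A1 := Apos n.+1.
have h' : A n.+1 < Cp * A n * n.+1%:R.
  move: h; rewrite /a factS natrM -(ltr_pM2r (mulr_gt0 N0 F0)).
  have -> : A n.+1 / ((n.+1)%:R * (n`!)%:R) * ((n.+1)%:R * (n`!)%:R) = A n.+1.
    by field; rewrite ?gt_eqF.
  have -> : Cp * (A n / (n`!)%:R) * ((n.+1)%:R * (n`!)%:R) = Cp * A n * n.+1%:R.
    by field; rewrite ?gt_eqF.
  by [].
rewrite -(ler_pM2r (mulr_gt0 N0 A1)).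
have -> : (n.+1%:R)^-1 * ((n.+1)%:R * A n.+1) = A n.+1 by field; rewrite ?gt_eqF.
have -> : Cp * (A n / A n.+1) * ((n.+1)%:R * A n.+1) = Cp * A n * n.+1%:R by field; rewrite ?gt_eqF.
exact: ltW.
Qed.

Lemma ex_l0 : exists l0, Cp * a l0 <= a l0.+1.
Proof.
apply/not_existsP => hn.
have hlt : forall l, a l.+1 < Cp * a l.
  by move=> l; rewrite ltNge; apply/negP; exact: hn.
apply: (@dvg_harmonic R).
apply: (@series_le_cvg R _ (Cp *: (fun p => A p / A p.+1))).
- by move=> n; apply: harmonic_ge0.
- move=> n; change (0 <= Cp * (A n / A n.+1)).
  apply: mulr_ge0; first exact: le_trans ler01 Cp1.
  by apply: divr_ge0; apply: ltW.
- move=> n; change ((n.+1%:R)^-1 <= Cp * (A n / A n.+1)).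
  exact: harm_le.
- by apply: is_cvg_seriesZ; exact: hM3.
Qed.

Lemma a_growth l0 : Cp * a l0 <= a l0.+1 -> forall d,
  Cp ^+ (l0 + d) * a l0 <= Cp ^+ l0 * a (l0 + d)%N.
Proof.
move=> h0; elim => [|d IH]; first by rewrite addn0.
have C0 : 0 < Cp by exact: lt_le_trans ltr01 Cp1.
have r : Cp * a (l0 + d)%N <= a (l0 + d).+1.
  have m := @lc_ratio_mono R a apos alc _ _ (leq_addr d l0).
  rewrite -(ler_pM2r (apos l0)).
  apply: le_trans m; rewrite mulrAC; apply: ler_wpM2r; first exact: ltW (apos _).
  exact: h0.
rewrite addnS exprS -mulrA.
apply: le_trans (ler_wpM2l (ltW C0) IH) _.
rewrite mulrCA; apply: ler_wpM2l; first by apply: exprn_ge0; exact: ltW.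
exact: r.
Qed.

Lemma exK : exists Kc : R, forall l, Cp ^+ l / a l <= Kc.
Proof.
have [l0 h0] := ex_l0.
have C0 : 0 < Cp by exact: lt_le_trans ltr01 Cp1.
have tge0 : forall l, 0 <= Cp ^+ l / a l.
  by move=> l; apply: divr_ge0; [apply: exprn_ge0; exact: ltW | exact: ltW (apos _)].
exists (\sum_(l < l0.+1) Cp ^+ l / a l) => l.
have [hl|hl] := leqP l l0.
  rewrite (bigD1 (Ordinal (hl : (l < l0.+1)%N))) //= lerDl.
  by apply: sumr_ge0 => i _; exact: tge0.
have ll : (l0 <= l)%N by exact: ltnW.
apply: (@le_trans _ _ (Cp ^+ l0 / a l0)).
  have g := @a_growth l0 h0 (l - l0); rewrite subnKC // in g.
  rewrite ler_pdivrMr ?apos // mulrAC ler_pdivlMr ?apos //.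
rewrite (bigD1 (Ordinal (ltnSn l0))) //= lerDl.
by apply: sumr_ge0 => i _; exact: tge0.
Qed.
End Kex.
Section Misc.
Variable R : realType.

Lemma cabs_ge0 (z : R[i]) : 0 <= cabs z.
Proof. by case: z => x y; rewrite /cabs /= sqrtr_ge0. Qed.

Lemma cabsM (x y : R[i]) : cabs (x * y) = cabs x * cabs y.
Proof. exact: ComplexField.Normc.normcM. Qed.

Lemma cabsD (x y : R[i]) : cabs (x + y) <= cabs x + cabs y.
Proof. exact: le_normcD. Qed.

Lemma cabs0 : cabs (0 : R[i]) = 0.
Proof. exact: ComplexField.Normc.normc0. Qed.

Lemma cabs_sum (I : Type) (l : seq I) (F : I -> R[i]) :
  cabs (\sum_(i <- l) F i) <= \sum_(i <- l) cabs (F i).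
Proof.
elim: l => [|x l IH]; first by rewrite !big_nil cabs0.
rewrite !big_cons; by apply: le_trans (cabsD _ _) _; rewrite lerD2l.
Qed.

Lemma cabs_iC_pow k : cabs (iC R ^- k) = 1.
Proof.
rewrite /cabs ComplexField.Normc.normcV.
have -> : ComplexField.Normc.normc (iC R ^+ k) = 1.
  elim: k => [|k IH]; first by rewrite expr0 ComplexField.Normc.normc1.
  rewrite exprS ComplexField.Normc.normcM IH mulr1.
  by rewrite /iC /= expr0n /= add0r expr1n sqrtr1.
by rewrite invr1.
Qed.

Lemma masks_size m mk : mk \in masks m -> size mk = m.
Proof.
elim: m mk => [|m IH] mk /=; first by rewrite inE => /eqP ->.
by rewrite mem_cat => /orP[] /mapP[mk' /IH <- ->].
Qed.

Lemma masks_sum m (F : nat -> R) :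
  \sum_(mk <- masks m) F (count id mk) = \sum_(j < m.+1) 'C(m, j)%:R * F j.
Proof.
elim: m F => [|m IH] F /=; first by rewrite big_seq1 big_ord1 /= mul1r.
rewrite big_cat !big_map /=.
under eq_bigr do rewrite add1n.
under [X in _ + X = _]eq_bigr do rewrite add0n.
rewrite (IH (fun j => F j.+1)) IH.
by rewrite (@pascal_sum R F) addrC.
Qed.
End Misc.
Section Est.
Variable R : realType.
Variable N : nat.
Variable b : 'rV[R]_N -> R[i].
Variable w : 'rV[R]_N.
Hypothesis hb : @DS R N b.
Variables (rho h Cp J : R) (a : nat -> R).
Hypothesis apos : forall p, 0 < a p.
Hypothesis alc : forall p, (1 <= p)%N -> a p ^+ 2 <= a p.-1 * a p.+1.
Hypothesis a0 : a 0%N = 1.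
Hypothesis a1 : a 1%N = 1.
Hypothesis Cp1 : 1 <= Cp.
Hypothesis h0 : 0 <= h.
Hypothesis J0 : 0 < J.

Let beta := cabs (b w).
Definition EE i := h ^+ i * J `^ (- (rho * i%:R)) * (i`!)%:R.
Definition gam j := (if j == 0%N then 1 else Cp) * beta * EE j * a j.
Definition PP n i := beta ^+ n * EE i * a i * @V R a Cp n i.

Lemma EE_ge0 i : 0 <= EE i.
Proof. by rewrite /EE !mulr_ge0 ?exprn_ge0 ?powR_ge0 ?ler0n. Qed.

Lemma PP_ge0 n i : 0 <= PP n i.
Proof.
rewrite /PP; apply: mulr_ge0; last exact: (@V_ge0 R a apos Cp Cp1).
apply: mulr_ge0; last exact: ltW.
by apply: mulr_ge0; [apply: exprn_ge0; exact: cabs_ge0 | exact: EE_ge0].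
Qed.

Lemma EE_split m j : (j <= m)%N -> 'C(m, j)%:R * (EE j * EE (m - j)%N) = EE m.
Proof.
move=> jm; rewrite /EE.
have e1 : h ^+ j * h ^+ (m - j) = h ^+ m by rewrite -exprD subnKC.
have e2 : J `^ (- (rho * j%:R)) * J `^ (- (rho * (m - j)%N%:R)) = J `^ (- (rho * m%:R)).
  rewrite -powRD; last by rewrite (gt_eqF J0) implybT.
  by congr (_ `^ _); rewrite natrB //; ring.
have e3 : 'C(m, j)%:R * ((j`!)%:R * ((m - j)`!)%:R) = (m`!)%:R :> R.
  by rewrite -!natrM bin_fact.
rewrite -e1 -e2 -e3; ring.
Qed.

Lemma step_ineq n m :
  \sum_(j < m.+1) 'C(m, j)%:R * (gam j * PP n (m - j)%N) <= PP n.+1 m.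
Proof.
have -> : \sum_(j < m.+1) 'C(m, j)%:R * (gam j * PP n (m - j)%N) =
   beta ^+ n.+1 * EE m * \sum_(j < m.+1) (if j == 0%N :> nat then 1 else Cp) * (a j * a (m - j)%N) * @V R a Cp n (m - j)%N.
  rewrite mulr_sumr; apply: eq_bigr => j _.
  have jm : (j <= m)%N by rewrite -ltnS.
  rewrite -(@EE_split m j jm) /gam /PP exprS; ring.
have hb0 : 0 <= beta ^+ n.+1 by apply: exprn_ge0; exact: cabs_ge0.
rewrite /PP -!mulrA; apply: (ler_wpM2l hb0).
apply: (ler_wpM2l (exprn_ge0 m h0)); apply: (ler_wpM2l (powR_ge0 _ _)); apply: (ler_wpM2l (ler0n _ _)).
exact: (@core R a apos alc a0 a1 Cp Cp1).
Qed.
Hypothesis hsingle : forall s : seq 'I_N, sorted (ge_ord N) s ->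
  cabs (foldr (@pd R N) b s w) <= gam (size s).

Lemma est_n n : forall s : seq 'I_N, sorted (ge_ord N) s ->
  cabs (foldr (@pd R N) (fun v => b v ^+ n) s w) <= PP n (size s).
Proof.
elim: n => [|n IH] s hs.
  have -> : (fun v => b v ^+ 0) = (fun _ => 1) by apply/funext => v; rewrite expr0.
  rewrite foldr_pd_cst; case: s hs => [|j s] _.
    change (cabs (1 : R[i]) <= PP 0 0).
    rewrite /cabs ComplexField.Normc.normc1 /PP /EE !expr0 mulr0 oppr0 powRr0 a0 (@V0 R a a0) /= !mul1r.
    by [].
  change (cabs (0 : R[i]) <= PP 0 (size s).+1).
  by rewrite cabs0; exact: PP_ge0.
have -> : (fun v => b v ^+ n.+1) = (fun v => b v * b v ^+ n) by apply/funext => v; rewrite exprS.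
rewrite (@leib R N _ _ hb (@DS_exp R N b hb n)); cbv beta.
set m := size s.
apply: le_trans (cabs_sum _ _ _ _) _.
apply: (@le_trans _ _ (\sum_(mk <- masks m) gam (count id mk) * PP n (m - count id mk))).
  rewrite big_seq_cond [X in _ <= X]big_seq_cond; apply: ler_sum => mk /andP[hmk _].
  have sz := masks_size _ _ hmk.
  rewrite cabsM; apply: ler_pM; [exact: cabs_ge0 | exact: cabs_ge0 | | ].
    by have := hsingle _ (sorted_mask (@ge_ord_trans N) mk hs); rewrite size_mask.
  have := IH _ (sorted_mask (@ge_ord_trans N) (map negb mk) hs).
  rewrite size_mask ?size_map // count_map.
  have -> : count (preim negb id) mk = (m - count id mk)%N.
    by rewrite -sz -(count_predC id mk) addKn.
  exact: id.
rewrite (@masks_sum R m (fun j => gam j * PP n (m - j))).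
exact: step_ineq.
Qed.
End Est.
Lemma jap_gt0 (R : realType) n (x : 'rV[R]_n) : 0 < jap x.
Proof.
rewrite /jap sqrtr_gt0; apply: (lt_le_trans ltr01); rewrite lerDl.
by apply: sumr_ge0 => j _; exact: sqr_ge0.
Qed.

Lemma mlen_split d (g : 'I_(d + d) -> nat) : mlen g = (mlen (gx g) + mlen (gxi g))%N.
Proof. by rewrite /mlen big_split_ord. Qed.

Lemma smooth_DS (R : realType) n (f : 'rV[R]_n -> R[i]) : smooth f -> DS R n f.
Proof. by move=> hs js j x; have [_ _ h3] := hs js; exact: h3. Qed.

Lemma Dop_cabs (R : realType) n g (f : 'rV[R]_n -> R[i]) x :
  cabs (Dop g f x) = cabs (foldr (@pd R n) f (cseq n g) x).
Proof. by rewrite /Dop cabsM cabs_iC_pow mul1r pdm_cseq. Qed.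

Lemma main_est (R : realType) (d : nat) (A : nat -> R) (rho B h C : R)
    (b : 'rV[R]_(d + d) -> R[i]) :
  seq_pos A -> cond_M1 A -> cond_M3' A -> cond_M4 A -> smooth b -> 0 < h ->
  (forall (g : 'I_(d + d) -> nat) w, ~ Qt B w ->
     cabs (Dop g b w) <= C * h ^+ mlen g * cabs (b w)
        * A (mlen (gxi g)) * A (mlen (gx g)) * jap w `^ (- (rho * (mlen g)%:R))) ->
  exists K, 0 < K /\ power_estimate A rho B (2 * h) K b.
Proof.
move=> [Apos [A0 A1]] M1 M3 M4 hsm hh hii.
set Cp := Num.max C 1.
have Cp1 : 1 <= Cp by rewrite le_max lexx orbT.
have CCp : C <= Cp by rewrite le_max lexx.
set a := fun p => A p / (p`!)%:R.
have fpos : forall p, 0 < (p`!)%:R :> R by move=> p; rewrite ltr0n fact_gt0.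
have apos : forall p, 0 < a p by move=> p; rewrite /a divr_gt0.
have alc : forall p, (1 <= p)%N -> a p ^+ 2 <= a p.-1 * a p.+1 by exact: M4.
have a0 : a 0%N = 1 by rewrite /a A0 divr1.
have a1 : a 1%N = 1 by rewrite /a A1 divr1.
have am : forall p, (p`!)%:R * a p = A p by move=> p; rewrite /a mulrC divfK // gt_eqF.
have [Kc hK] := @exK R A Apos M3 alc Cp Cp1.
have hK' : forall l, Cp ^+ l / a l <= Kc := hK.
have K1 : 1 <= Kc by have := hK' 0%N; rewrite expr0 a0 divr1.
exists Kc; split; first exact: lt_le_trans ltr01 K1.
move=> g n w hw.
have J0 := @jap_gt0 R _ w.
have h0 : 0 <= h by exact: ltW.
have hDS := @smooth_DS R _ b hsm.
have hsingle : forall s : seq 'I_(d + d), sorted (ge_ord (d + d)) s ->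
    cabs (foldr (@pd R (d + d)) b s w) <= gam R (d + d) b w rho h Cp (jap w) a (size s).
  move=> s hs; case: s hs => [|j s] hs.
    rewrite /gam /EE /= !expr0 mulr0 oppr0 powRr0 a0 !mul1r !mulr1.
    exact: lexx.
  have := hii (cnt _ (j :: s)) w hw.
  rewrite Dop_cabs -sorted_cseq_eq // mlen_cnt //.
  set m := size (j :: s).
  move=> H; apply: le_trans H _.
  have hAA : A (mlen (gxi (cnt _ (j :: s)))) * A (mlen (gx (cnt _ (j :: s)))) <= A m.
    have := @lc_super R A Apos M1 A0 (mlen (gxi (cnt _ (j :: s)))) (mlen (gx (cnt _ (j :: s)))).
    by rewrite addnC -mlen_split mlen_cnt.
  rewrite /gam /EE /= -/m.
  have Jp := powR_ge0 (jap w) (- (rho * m%:R)).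
  have bp := @cabs_ge0 R (b w).
  have Ap : 0 <= A (mlen (gxi (cnt _ (j :: s)))) * A (mlen (gx (cnt _ (j :: s)))).
    by apply: mulr_ge0; apply: ltW.
  have -> : Cp * cabs (b w) * (h ^+ m * jap w `^ (- (rho * m%:R)) * (m`!)%:R) * a m
      = (h ^+ m * cabs (b w) * jap w `^ (- (rho * m%:R))) * (Cp * ((m`!)%:R * a m)) by ring.
  rewrite am.
  have -> : C * h ^+ m * cabs (b w) * A (mlen (gxi (cnt _ (j :: s)))) * A (mlen (gx (cnt _ (j :: s)))) *
      jap w `^ (- (rho * m%:R)) = (h ^+ m * cabs (b w) * jap w `^ (- (rho * m%:R))) *
      (C * (A (mlen (gxi (cnt _ (j :: s)))) * A (mlen (gx (cnt _ (j :: s)))))) by ring.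
  apply: ler_wpM2l; first by apply: mulr_ge0 => //; apply: mulr_ge0 => //; apply: exprn_ge0.
  apply: le_trans (ler_wpM2r Ap CCp) _.
  by apply: ler_wpM2l => //; exact: le_trans ler01 Cp1.
have := @est_n R (d + d) b w hDS rho h Cp (jap w) a apos alc a0 a1 Cp1 h0 J0 hsingle n (cseq _ g) (sorted_cseq _ g).
rewrite size_cseq -Dop_cabs => H; apply: le_trans H _.
set m := mlen g.
rewrite /PP /EE.
have bp : 0 <= cabs (b w) ^+ n by apply: exprn_ge0; exact: cabs_ge0.
apply: le_trans (ler_wpM2l _ (@V_bound R a apos Cp Cp1 Kc hK' n m)) _.
  apply: mulr_ge0; last exact: ltW (apos m).
  apply: mulr_ge0 => //.
  by apply: mulr_ge0; [apply: mulr_ge0; [exact: exprn_ge0|exact: powR_ge0] | exact: ler0n].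
rewrite -(am m) exprMn le_eqVlt; apply/orP; left; apply/eqP; ring.
Qed.
Theorem corollary7p7 (R : realType) (k : ultra_kind) (d : nat)
    (M A : nat -> R) (rho B : R) (b : 'rV[R]_(d + d) -> R[i]) :
  standing M A rho ->
  Gamma k M A rho b ->
  hypo_i k M B b ->
  hypo_ii k A rho B b ->
  match k with
  | Beurling => forall h : R, 0 < h -> exists C : R, 0 < C /\ power_estimate A rho B h C b
  | Roumieu => exists h C : R, [/\ 0 < h, 0 < C & power_estimate A rho B h C b]
  end.
Proof.
move=> [[_ hA] _ [M1 _ M3 M4] _ _] [hsm _] _.
case: k => /= hii.
  move=> H hH.
  have h2 : 0 < H / 2 by rewrite divr_gt0.
  have [C hC] := hii (H / 2) h2.
  have [K [K0 hK]] := @main_est R d A rho B _ C b hA M1 M3 M4 hsm h2 hC.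
  exists K; split => //.
  have e : 2 * (H / 2) = H by rewrite mulrC divfK // pnatr_eq0.
  by rewrite e in hK.
have [h [C [h0 hC]]] := hii.
have [K [K0 hK]] := @main_est R d A rho B _ C b hA M1 M3 M4 hsm h0 hC.
exists (2 * h), K; split => //.
by rewrite mulr_gt0.
Qed.
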